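(* Let $p\ge2$ be an integer, $t_*,\rho\in\mathbb{R}$, and let $Y\subset\mathbb{R}$ be a set that is not bounded above. Let $X\subset\mathbb{R}$ contain $t_*+y$ for every $y\in Y$ with $y>\rho$. Let $\Lambda: X-Y\to[0,\infty)$ satisfy $\Lambda(t_* )>0$ and \[ \lim_{y\in Y,\ y\to\infty}\Lambda(x_0-y)\,\Lambda(t_*+y-y_0)=0 \quad\text{for all } x_0\in X,\ y_0\in Y. \] If $\det(\Lambda(x_j-y_k))_{j,k=1}^p\ge0$ for all $\mathbf{x}\in\operatorname{inc}(X,p)$ and $\mathbf{y}\in\operatorname{inc}(Y,p)$, then the kernel $X\times Y\to\mathbb{R}$, $(x,y)\mapsto\Lambda(x-y)$, is $\mathrm{TN}_p$.
   Context: For a totally ordered set $X$ and integer $r \geq 1$, $\operatorname{inc}(X,r)$ denotes the set of $r$-tuples $(x_1,\dots,x_r) \in X^r$ with $x_1 < \cdots < x_r$. $X-Y=\{x-y:x\in X,y\in Y\}$. For $X,Y \subset \mathbb{R}$, a kernel $K : X \times Y \to \mathbb{R}$ is $\mathrm{TN}_p$ if $\det (K(x_j,y_k))_{j,k=1}^r \geq 0$ for all $1 \leq r \leq p$ and all $\mathbf{x} \in \operatorname{inc}(X,r)$, $\mathbf{y} \in \operatorname{inc}(Y,r)$. *)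

(* Defs.v *)
From HB Require Import structures.
From mathcomp Require Import all_boot all_order all_algebra.
From mathcomp Require Import reals.
Set Implicit Arguments. Unset Strict Implicit. Unset Printing Implicit Defensive.
Import Order.TTheory GRing.Theory Num.Theory.
Local Open Scope ring_scope.

Definition inc (R : realType) (X : R -> Prop) (r : nat) (x : 'I_r -> R) : Prop :=
  (forall i, X (x i)) /\ (forall i j : 'I_r, (i < j)%N -> x i < x j).

Definition TN (R : realType) (X Y : R -> Prop) (K : R -> R -> R) (p : nat) : Prop :=
  forall (r : nat), (1 <= r)%N -> (r <= p)%N ->
  forall (x y : 'I_r -> R), inc X x -> inc Y y ->
    0 <= \det (\matrix_(j, k) K (x j) (y k)).

Definition in_diff (R : realType) (X Y : R -> Prop) (z : R) : Prop :=
  exists x y, X x /\ Y y /\ z = x - y.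

(* Main.v *)
Require Import Defs.
From HB Require Import structures.
From mathcomp Require Import all_boot all_order all_algebra.
From mathcomp Require Import reals.
From mathcomp Require Import zify ring lra.
Import Order.TTheory GRing.Theory Num.Theory.
Set Implicit Arguments. Unset Strict Implicit. Unset Printing Implicit Defensive.
Local Open Scope ring_scope.

Lemma fin_bound (R : realType) (T : finType) (Q : T -> R -> Prop) :
 (forall i M M', M <= M' -> Q i M -> Q i M') -> (forall i, exists M, Q i M) ->
 exists M, forall i, Q i M.
Proof.
move=> mono ex.
suff [M HM]: exists M, forall i, i \in enum T -> Q i M.
  by exists M => i; apply HM; rewrite mem_enum.
elim: (enum T) => [|a s [M HM]]; first by exists 0.
have [Ma HMa] := ex a.
exists (Num.max Ma M) => i; rewrite inE => /orP[/eqP->|his].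
  by apply: mono HMa; rewrite le_max lexx.
by apply: mono (HM i his); rewrite le_max lexx orbT.
Qed.

Definition Pm (R : realType) (X Y : R -> Prop) (Lambda : R -> R) (m : nat) :=
  forall x y : 'I_m -> R, inc X x -> inc Y y ->
     0 <= \det (\matrix_(j, k) Lambda (x j - y k)).

Definition ext (R : realType) r (x : 'I_r -> R) (v : R) : 'I_(r + 1) -> R :=
  fun i => match split i with inl j => x j | inr _ => v end.

Lemma extl (R : realType) r (x : 'I_r -> R) v a : ext x v (lshift 1 a) = x a.
Proof. by rewrite /ext -[lshift 1 a]/(unsplit (inl a)) unsplitK. Qed.

Lemma extr (R : realType) r (x : 'I_r -> R) v a : ext x v (rshift r a) = v.
Proof. by rewrite /ext -[rshift r a]/(unsplit (inr a)) unsplitK. Qed.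

Lemma inc_ext (R : realType) (X : R -> Prop) r (x : 'I_r -> R) v :
  inc X x -> X v -> (forall i, x i < v) -> inc X (ext x v).
Proof.
move=> [h1 h2] hv hlt; split.
  by move=> i; case: (split_ordP i) => a ->; rewrite ?extl ?extr.
move=> i j; case: (split_ordP i) => a ->; case: (split_ordP j) => b ->;
  rewrite ?extl ?extr /= => h.
- exact: h2.
- exact: hlt.
- have := ltn_ord b; lia.
- have := ltn_ord a; have := ltn_ord b; lia.
Qed.

Lemma block_det (R : realType) r (A : 'M[R]_r) (b : 'M_(r,1)) (c : 'M_(1,r)) (d : 'M_1) :
  A \in unitmx ->
  \det (block_mx A b c d) = \det A * (d 0 0 - (c *m invmx A *m b) 0 0).
Proof.
move=> uA.
have -> : block_mx A b c d =
  block_mx 1%:M 0 (c *m invmx A) 1%:M *m block_mx A b 0 (d - c *m invmx A *m b).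
  rewrite mulmx_block !mul1mx !mul0mx !addr0 mulmxKV // -mulmxA.
  congr block_mx; rewrite mulmxA; apply/matrixP => i j; rewrite !mxE; ring.
rewrite det_mulmx det_lblock det_ublock !det1 !mul1r det_mx11 !mxE.
by [].
Qed.

Lemma step (R : realType) (tstar rho : R) (X Y : R -> Prop) (Lambda : R -> R) r :
  (forall M : R, exists y, Y y /\ M < y) ->
  (forall y, Y y -> rho < y -> X (tstar + y)) ->
  0 < Lambda tstar ->
  (forall x0 y0, X x0 -> Y y0 ->
     forall eps : R, 0 < eps -> exists M : R, forall y, Y y -> M < y ->
       `|Lambda (x0 - y) * Lambda (tstar + y - y0)| < eps) ->
  Pm X Y Lambda (r + 1) -> Pm X Y Lambda r.
Proof.
move=> Yunb hXY L0 hlim HP x y hx hy.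
rewrite leNgt; apply/negP => Hneg.
set A := \matrix_(j, k) Lambda (x j - y k) in Hneg.
have uA : A \in unitmx by rewrite unitmxE unitfE ltr0_neq0.
set N := invmx A.
set S := \sum_k \sum_i `|N i k|.
have S0 : 0 <= S by apply: sumr_ge0 => k _; apply: sumr_ge0 => i _.
set eps := Lambda tstar / (1 + S).
have eps0 : 0 < eps by rewrite divr_gt0 // ltr_pwDl.
have [M HM] : exists M : R, forall ik : ('I_r * 'I_r)%type,
  (forall y', Y y' -> M < y' ->
       `|Lambda (x ik.2 - y') * Lambda (tstar + y' - y ik.1)| < eps)
     /\ y ik.1 <= M /\ x ik.2 - tstar <= M.
  apply: fin_bound.
- move=> [i k] M M' hMM' [h1 [h2 h3]]; split; last by split; apply: le_trans hMM'.
  by move=> y' hy' hM; apply: h1 => //; apply: le_lt_trans hM.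
- move=> [i k].
  have [M0 HM0] := hlim (x k) (y i) (hx.1 k) (hy.1 i) eps eps0.
  exists (Num.max M0 (Num.max (y i) (x k - tstar))); split.
    by move=> y' hy' hM; apply: HM0 => //; apply: le_lt_trans hM; rewrite le_max lexx.
  by rewrite !le_max !lexx !orbT.
have [y' [Yy' hy']] := Yunb (Num.max M rho).
rewrite gt_max in hy'; case/andP: hy' => hMy' hry'.
have hinx : inc X (ext x (tstar + y')).
  apply: inc_ext => //; first exact: hXY.
  move=> i; have [_ [_ h]] := HM (i, i); rewrite /= in h; lra.
have hiny : inc Y (ext y y').
  apply: inc_ext => // i; have [_ [h _]] := HM (i, i); rewrite /= in h; lra.
have := HP _ _ hinx hiny.
set b : 'M_(r,1) := \matrix_(j, k) Lambda (x j - y').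
set c : 'M_(1,r) := \matrix_(j, k) Lambda (tstar + y' - y k).
set d : 'M_1 := \matrix_(j, k) Lambda tstar.
have -> : \matrix_(j, k) Lambda (ext x (tstar + y') j - ext y y' k) = block_mx A b c d.
  apply/matrixP => i j; rewrite mxE.
  case: (split_ordP i) => a ->; case: (split_ordP j) => e ->;
    rewrite ?block_mxEul ?block_mxEur ?block_mxEdl ?block_mxEdr !mxE ?extl ?extr //.
  by rewrite addrK.
rewrite block_det // nmulr_rge0 // subr_le0 => hle.
have : (c *m N *m b) 0 0 <= S * eps.
  rewrite !mxE /S mulr_suml; apply: ler_sum => k _.
  rewrite !mxE mulr_suml mulr_suml; apply: ler_sum => i _.
  rewrite !mxE.
  have [h _] := HM (i, k); have := h y' Yy' hMy'; rewrite /= => hlt.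
  apply: le_trans (ler_norm _) _.
  have -> : Lambda (tstar + y' - y i) * N i k * Lambda (x k - y') =
     N i k * (Lambda (x k - y') * Lambda (tstar + y' - y i)) by ring.
  rewrite normrM; apply: ler_wpM2l => //; exact: ltW.
have : S * eps < Lambda tstar.
  rewrite /eps mulrA ltr_pdivrMr; last by rewrite ltr_pwDl.
  nra.
rewrite mxE in hle.
lra.
Qed.

Theorem mainTheorem19 (R : realType) (p : nat) (tstar rho : R)
  (X Y : R -> Prop) (Lambda : R -> R) :
  (2 <= p)%N ->
  (forall M : R, exists y, Y y /\ M < y) ->
  (forall y, Y y -> rho < y -> X (tstar + y)) ->
  (forall z, in_diff X Y z -> 0 <= Lambda z) ->
  0 < Lambda tstar ->
  (forall x0 y0, X x0 -> Y y0 ->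
     forall eps : R, 0 < eps -> exists M : R, forall y, Y y -> M < y ->
       `|Lambda (x0 - y) * Lambda (tstar + y - y0)| < eps) ->
  (forall x y : 'I_p -> R, inc X x -> inc Y y ->
     0 <= \det (\matrix_(j, k) Lambda (x j - y k))) ->
  TN X Y (fun x y => Lambda (x - y)) p.
Proof.
move=> _ Yunb hXY _ L0 hlim HP.
have down : forall n r, (r + n)%N = p -> Pm X Y Lambda r.
  elim=> [|n IH] r hr.
    rewrite addn0 in hr; rewrite hr; exact: HP.
  apply: (@step R tstar rho X Y Lambda r Yunb hXY L0 hlim).
  apply: (IH (r + 1)%N); rewrite -addnA add1n; exact: hr.
move=> r _ hrp x y hx hy.
have H := down (p - r)%N r (subnKC hrp) x y hx hy.
exact H.
Qed.
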